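(* Let $b,c_1,c_2$ be positive integers and let $\alpha/\beta$ be the right lobster $\mathcal{L}^{c_1,c_2}_b$, with $c_1$, $b$, $c_2$ cells in the top, middle and bottom rows respectively. Then the length of the longest chain in the poset $\mathrm{SET}(\alpha/\beta)$ is $$\mathrm{rank}(\mathrm{SET}(\alpha/\beta))=\begin{cases}c_2(b+c_1)-\binom{c_1+1}{2} & \text{if } c_1\le c_2,\\ bc_1+\binom{c_2}{2} & \text{if } c_1>c_2.\end{cases}$$
   Context: Rows are numbered from the bottom. The right lobster $\mathcal{L}^{c_1,c_2}_b$ is the skew diagram $\alpha/\beta$ with $\alpha=(b+1+c_2,b+1,b+1+c_1)$, $\beta=(b+1,1,b+1)$: a bottom row of $c_2$ cells in columns $b+2,\ldots,b+1+c_2$, a middle row of $b$ cells in columns $2,\ldots,b+1$, and a top row of $c_1$ cells in columns $b+2,\ldots,b+1+c_1$. $\mathrm{SET}(\alpha/\beta)$ is the set of bijective fillings with $1,\ldots,N$ ($N=b+c_1+c_2$) whose rows increase left to right and columns increase bottom to top. For $1\le i\le N-1$, $\pi_i(T)=T$ if $i+1$ is in a strictly higher row than $i$, $\pi_i(T)=s_i(T)$ (swap $i$ and $i+1$) if $i+1$ is in a strictly lower row than $i$, and $\pi_i(T)=0$ otherwise; the poset order is $T\le T'$ iff $T'$ is obtained from $T$ by a sequence of operators $\pi_i$ (all intermediate results nonzero). The length of a chain $x_0<x_1<\cdots<x_r$ is $r$. *)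

(* Defs.v *)
From mathcomp Require Import all_boot.
From Stdlib Require Import Relations.
Set Implicit Arguments. Unset Strict Implicit. Unset Printing Implicit Defensive.

(* A cell is a pair (row, column); rows are numbered from the bottom (row 1),
   columns from the left (column 1). *)
Definition cell := (nat * nat)%type.
Definition crow (x : cell) : nat := x.1.
Definition ccol (x : cell) : nat := x.2.

(* Cells of the right lobster L_b^{c1,c2} = alpha/beta with
   alpha = (b+1+c2, b+1, b+1+c1), beta = (b+1, 1, b+1). *)
Definition lobster_cell (b c1 c2 : nat) (x : cell) : bool :=
  let: (r, c) := x in
  [|| (r == 1) && (b + 2 <= c <= b + 1 + c2),
      (r == 2) && (2 <= c <= b + 1)
    | (r == 3) && (b + 2 <= c <= b + 1 + c1)].

Definition lobster_size (b c1 c2 : nat) : nat := b + c1 + c2.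

(* A filling with 1..N is encoded by the sequence s of cells of length N,
   where the entry k (1 <= k <= N) sits in cell  nth (0,0) s (k-1). *)
Definition cellof (s : seq cell) (k : nat) : cell := nth (0, 0) s k.-1.

Definition is_SET (b c1 c2 : nat) (s : seq cell) : Prop :=
  [/\ size s = lobster_size b c1 c2, uniq s, all (lobster_cell b c1 c2) s,
      (forall i j, 1 <= i -> i < j -> j <= size s ->
         crow (cellof s i) = crow (cellof s j) ->
         ccol (cellof s i) < ccol (cellof s j))
    &
      (forall i j, 1 <= i -> i < j -> j <= size s ->
         ccol (cellof s i) = ccol (cellof s j) ->
         crow (cellof s i) < crow (cellof s j))].

Definition swap_entries (s : seq cell) (i : nat) : seq cell :=
  [seq nth (0, 0) s (if j == i.-1 then i else if j == i then i.-1 else j)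
  | j <- iota 0 (size s)].

(* pi_i; None encodes the result 0. *)
Definition pi_op (s : seq cell) (i : nat) : option (seq cell) :=
  if crow (cellof s i) < crow (cellof s i.+1) then Some s
  else if crow (cellof s i.+1) < crow (cellof s i) then Some (swap_entries s i)
  else None.

Definition pi_step (s t : seq cell) : Prop :=
  exists i, 1 <= i /\ i <= (size s).-1 /\ pi_op s i = Some t.

Definition SET_le (s t : seq cell) : Prop := clos_refl_trans _ pi_step s t.
Definition SET_lt (s t : seq cell) : Prop := SET_le s t /\ s <> t.

Definition SET_chain (b c1 c2 : nat) (r : nat) (x : nat -> seq cell) : Prop :=
  (forall k, k <= r -> is_SET b c1 c2 (x k)) /\
  (forall k, k < r -> SET_lt (x k) (x k.+1)).

Definition longest_chain_length (b c1 c2 R : nat) : Prop :=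
  (exists x, SET_chain b c1 c2 R x) /\
  (forall r x, SET_chain b c1 c2 r x -> r <= R).

(* Main.v *)
Require Import Defs.
From mathcomp Require Import all_boot.
From Stdlib Require Import Relations.
From mathcomp Require Import zify.
Set Implicit Arguments. Unset Strict Implicit.
Ltac mlia := (try unfold cell in * ); lia.


Fixpoint inv (w : seq nat) : nat :=
  if w is x :: w' then count (fun y => y < x) w' + inv w' else 0.

Fixpoint cross (a v : seq nat) : nat :=
  if a is z :: a' then count (fun y => y < z) v + cross a' v else 0.

Lemma inv_cat a v : inv (a ++ v) = inv a + inv v + cross a v.
Proof. elim: a => [|z a IH] /=; first mlia. rewrite count_cat IH. mlia. Qed.

Lemma cross_perm a v v' : perm_eq v v' -> cross a v = cross a v'.
Proof. move=> p; elim: a => //= z a ->; by rewrite (permP p). Qed.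

Lemma cross_catl a a' v : cross (a ++ a') v = cross a v + cross a' v.
Proof. elim: a => //= z a ->; mlia. Qed.

Lemma cross_rcons1 u x : cross u [:: x] = count (fun y => x < y) u.
Proof. elim: u => //= z u ->. by case: ltnP. Qed.

Lemma inv_rcons u x : inv (rcons u x) = inv u + count (fun y => x < y) u.
Proof. rewrite -cats1 inv_cat cross_rcons1 /=. mlia. Qed.

Lemma descent w : 0 < inv w -> exists i, i.+1 < size w /\ nth 0 w i.+1 < nth 0 w i.
Proof.
elim: w => //= x w IH.
case H: (0 < inv w).
  move=> _; have [i [H1 H2]] := IH H; exists i.+1; by split.
case: w IH H => [|y w] IH H /=; first by rewrite addn0.
case: (ltnP y x) => Hyx.
  move=> _; exists 0; by split.
move=> Hc.
have : count (fun z => z < x) w <= count (fun z => z < y) w.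
  apply: sub_count => z /= Hz; mlia.
move: H => /= /negbT; rewrite -leqNgt => H1 H2; exfalso. rewrite /nat_of_bool in Hc. mlia.
Qed.

Lemma swap_eq (s : seq cell) k : k.+1 < size s ->
  swap_entries s k.+1 = take k s ++ nth (0,0) s k.+1 :: nth (0,0) s k :: drop k.+2 s.
Proof.
move=> Hk.
apply: (@eq_from_nth _ (0,0)).
  rewrite /swap_entries size_map size_iota size_cat size_take /= size_drop.
  have -> : (k < size s) = true by mlia.
  mlia.
rewrite /swap_entries size_map size_iota => j Hj.
rewrite (nth_map 0) ?size_iota // nth_iota // add0n /=.
rewrite nth_cat size_take.
have -> : (k < size s) = true by mlia.
have : j < k \/ j = k \/ j = k.+1 \/ k.+1 < j by mlia.
case=> [H|[H|[H|H]]].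
- have -> : (j == k) = false by mlia.
  have -> : (j == k.+1) = false by mlia.
  by rewrite H nth_take.
- subst j; by rewrite eqxx ltnn subnn.
- subst j; rewrite eqxx ltnNge leqnSn /= subSnn.
  have -> : (k.+1 == k) = false by mlia. by [].
- have -> : (j == k) = false by mlia.
  have -> : (j == k.+1) = false by mlia.
  have -> : (j < k) = false by mlia.
  have -> : j - k = (j - k.+2).+2 by mlia.
  by rewrite /= nth_drop; congr nth; mlia.
Qed.

Lemma s_eq (s : seq cell) k : k.+1 < size s ->
  s = take k s ++ nth (0,0) s k :: nth (0,0) s k.+1 :: drop k.+2 s.
Proof.
move=> Hk. rewrite -{1}(cat_take_drop k s) (drop_nth (0,0)); last mlia.
by rewrite (drop_nth (0,0) (n:=k.+1)).
Qed.

Lemma inv_swap (s : seq cell) k : k.+1 < size s ->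
  crow (nth (0,0) s k.+1) < crow (nth (0,0) s k) ->
  inv (map crow (swap_entries s k.+1)) + 1 = inv (map crow s).
Proof.
move=> Hk Hd. rewrite swap_eq // [in RHS](@s_eq s k Hk).
set a := take k s; set x := nth (0,0) s k; set y := nth (0,0) s k.+1; set c := drop k.+2 s.
rewrite !map_cat !inv_cat.
rewrite (@cross_perm (map crow a) (map crow (y :: x :: c)) (map crow (x :: y :: c))); last first.
  apply/permP => p /=; mlia.
rewrite /= Hd. have -> : (crow x < crow y) = false by rewrite ltnNge (ltnW Hd).
mlia.
Qed.

Definition Rc (x y : cell) : bool :=
  ((crow x == crow y) ==> (ccol x < ccol y)) && ((ccol x == ccol y) ==> (crow x < crow y)).

Lemma Rc_irr : irreflexive Rc.
Proof. move=> x; by rewrite /Rc !eqxx !ltnn. Qed.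

Lemma Rc_intro x y :
  (crow x = crow y -> ccol x < ccol y) -> (ccol x = ccol y -> crow x < crow y) -> Rc x y.
Proof.
move=> H1 H2; apply/andP; split; apply/implyP => /eqP E; [exact: H1 | exact: H2].
Qed.

Lemma Rc_elim x y : Rc x y ->
  (crow x = crow y -> ccol x < ccol y) /\ (ccol x = ccol y -> crow x < crow y).
Proof.
move=> /andP [/implyP H1 /implyP H2]; split => E; [apply: H1 | apply: H2]; exact/eqP.
Qed.

Lemma conds_pairwise (s : seq cell) :
  (forall i j, 1 <= i -> i < j -> j <= size s ->
         crow (cellof s i) = crow (cellof s j) ->
         ccol (cellof s i) < ccol (cellof s j)) ->
  (forall i j, 1 <= i -> i < j -> j <= size s ->
         ccol (cellof s i) = ccol (cellof s j) ->
         crow (cellof s i) < crow (cellof s j)) ->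
  pairwise Rc s.
Proof.
move=> H1 H2; apply/(pairwiseP (0,0)) => i j; rewrite !inE => Hi Hj Hij.
apply: Rc_intro => E.
- exact: (H1 i.+1 j.+1).
- exact: (H2 i.+1 j.+1).
Qed.

Lemma pairwise_conds (s : seq cell) : pairwise Rc s ->
  (forall i j, 1 <= i -> i < j -> j <= size s ->
         crow (cellof s i) = crow (cellof s j) ->
         ccol (cellof s i) < ccol (cellof s j)) /\
  (forall i j, 1 <= i -> i < j -> j <= size s ->
         ccol (cellof s i) = ccol (cellof s j) ->
         crow (cellof s i) < crow (cellof s j)).
Proof.
move=> /(pairwiseP (0,0)) H.
have K : forall i j, 1 <= i -> i < j -> j <= size s -> Rc (cellof s i) (cellof s j).
  move=> i j Hi Hij Hj; rewrite /cellof; apply: H; rewrite ?inE; mlia.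
split => i j Hi Hij Hj E; have [K1 K2] := Rc_elim (K i j Hi Hij Hj); auto.
Qed.

Lemma SET_pairwise b c1 c2 s : is_SET b c1 c2 s -> pairwise Rc s.
Proof. case=> _ _ _ H1 H2; exact: conds_pairwise. Qed.

Lemma pairwise_SET b c1 c2 s :
  size s = lobster_size b c1 c2 -> all (lobster_cell b c1 c2) s -> pairwise Rc s ->
  is_SET b c1 c2 s.
Proof.
move=> Hs Ha Hp; have [H1 H2] := pairwise_conds Hp.
split => //; exact: pairwise_uniq Rc_irr Hp.
Qed.

Lemma swap_SET b c1 c2 (s : seq cell) k : is_SET b c1 c2 s -> k.+1 < size s ->
  crow (nth (0,0) s k.+1) < crow (nth (0,0) s k) ->
  is_SET b c1 c2 (swap_entries s k.+1).
Proof.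
move=> HS Hk Hd; have Hp := SET_pairwise HS.
case: HS => Hsz Hu Ha _ _.
move: Hp Hsz Ha; rewrite swap_eq // {1 2 3}(@s_eq s k Hk).
set a := take k s; set x := nth (0,0) s k; set y := nth (0,0) s k.+1; set c := drop k.+2 s.
have P : perm_eq (a ++ x :: y :: c) (a ++ y :: x :: c).
  rewrite perm_cat2l; apply/permP => p /=; mlia.
move=> Hp Hsz Ha; apply: pairwise_SET.
- by rewrite -(perm_size P).
- by rewrite -(perm_all _ P).
move: Hp; rewrite !pairwise_cat !allrel_consr /= => /and3P [/and3P [A1 A2 A3] B C].
move: C => /andP [/andP [Cxy Cx] /andP [Cy Cp]].
have Ryx : Rc y x.
  apply: Rc_intro => E; [move: Hd; rewrite -/x -/y; mlia | exact: Hd].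
by rewrite A1 A2 A3 B Ryx Cx Cy Cp.
Qed.

Lemma pi_step_inv s t : pi_step s t -> t = s \/ inv (map crow t) < inv (map crow s).
Proof.
case=> i [Hi [Hi2]]; rewrite /pi_op /cellof.
case: ifP => [_ [E] | _]; first by left.
case: ifP => // Hd [E]; right; subst t.
case: i Hi Hi2 Hd => [//|k] _ Hk Hd /=.
have Hk' : k.+1 < size s by mlia.
have := inv_swap Hk' Hd; mlia.
Qed.

Lemma SET_le_inv s t : SET_le s t -> t = s \/ inv (map crow t) < inv (map crow s).
Proof.
elim=> [x y /pi_step_inv // | x | x y z _ IH1 _ IH2]; first by left.
case: IH1 => [E1|H1]; case: IH2 => [E2|H2]; subst; auto; right; mlia.
Qed.

Lemma SET_lt_inv s t : SET_lt s t -> inv (map crow t) < inv (map crow s).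
Proof. case=> /SET_le_inv [->|//] H; by case: H. Qed.

Definition cm (r : nat) (u : seq nat) := count_mem r u.
Definition Pw (b c1 c2 : nat) (u : seq nat) :=
  [/\ cm 1 u <= c2, cm 2 u <= b, cm 3 u <= c1, minn (cm 3 u) c2 <= cm 1 u
    & all (fun x => [|| x == 1, x == 2 | x == 3]) u].

Fixpoint Sm (c1 n : nat) : nat := if n is n'.+1 then Sm c1 n' + minn n' c1 else 0.

Lemma count_gt u : all (fun x => [|| x == 1, x == 2 | x == 3]) u ->
  [/\ count (fun y => 1 < y) u = cm 2 u + cm 3 u,
      count (fun y => 2 < y) u = cm 3 u &
      count (fun y => 3 < y) u = 0].
Proof.
rewrite /cm; elim: u => [|y u IH] //= /andP [Hy /IH [-> -> ->]].
by case/or3P: Hy => /eqP ->; split => /=; mlia.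
Qed.

Lemma cm_rcons r u x : cm r (rcons u x) = cm r u + (x == r).
Proof. by rewrite /cm -cats1 count_cat /= addn0 eq_sym. Qed.

Lemma psi b c1 c2 u : (forall k, Pw b c1 c2 (take k u)) ->
  inv u + cm 2 u * (c2 - cm 1 u) <= cm 2 u * maxn c1 c2 + Sm c1 (cm 1 u).
Proof.
elim/last_ind: u => [|u x IH] H; first by [].
have Hu : forall k, Pw b c1 c2 (take k u).
  move=> k; case: (leqP k (size u)) => Hk.
    by have := H k; rewrite -cats1 takel_cat.
  rewrite take_oversize; last exact: ltnW.
  by have := H (size u); rewrite -cats1 takel_cat // take_size.
have IH' := IH Hu.
have := H (size u).+1; rewrite take_oversize ?size_rcons //.
have := Hu (size u); rewrite take_size.
case=> A1 A2 A3 A4 A5 [].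
rewrite !cm_rcons all_rcons => B1 B2 B3 B4 /andP [Hx _].
rewrite inv_rcons.
have [G1 G2 G3] := count_gt A5.
move: IH' A1 A2 A3 A4 B1 B2 B3 B4.
set n1 := cm 1 u; set n2 := cm 2 u; set n3 := cm 3 u.
case/or3P: Hx => /eqP -> /=.
- rewrite G1 /= => IH' A1 A2 A3 A4 B1 B2 B3 B4.
  rewrite !addn0 addn1 /=.
  have E : n2 * (c2 - n1) = n2 * (c2 - n1.+1) + n2.
    have -> : c2 - n1 = (c2 - n1.+1).+1 by mlia.
    by rewrite mulnS addnC.
  mlia.
- rewrite G2 /= => IH' A1 A2 A3 A4 B1 B2 B3 B4.
  rewrite !addn0 addn1 !mulSn.
  mlia.
- rewrite G3 /= => IH' A1 A2 A3 A4 B1 B2 B3 B4.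
  rewrite !addn0. mlia.
Qed.

Lemma Sm_small c1 n : n <= c1.+1 -> Sm c1 n = 'C(n, 2).
Proof.
elim: n => [//|n IH] Hn /=; rewrite IH; last mlia.
rewrite binS bin1. have -> : minn n c1 = n by mlia. by [].
Qed.

Lemma bin2_id n : 'C(n, 2) * 2 + n = n * n.
Proof. elim: n => [//|n IH]; rewrite binS bin1. nia. Qed.

Lemma Sm_big c1 d : Sm c1 (c1 + d) + 'C(c1.+1, 2) = c1 * (c1 + d).
Proof.
elim: d => [|d IH].
  rewrite addn0 Sm_small // binS bin1. have := bin2_id c1. nia.
rewrite addnS /=. have -> : minn (c1 + d) c1 = c1 by mlia. nia.
Qed.

Lemma Sm_mono c1 m n : m <= n -> Sm c1 m <= Sm c1 n.
Proof.
move=> /subnK <-; elim: (n - m) => [|d IH]; first by rewrite add0n.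
rewrite addSn /=; mlia.
Qed.

Lemma R_eq b c1 c2 :
  b * maxn c1 c2 + Sm c1 c2 =
  (if c1 <= c2 then c2 * (b + c1) - 'C(c1.+1, 2) else b * c1 + 'C(c2, 2)).
Proof.
case: ifP => H.
  have -> : maxn c1 c2 = c2 by mlia.
  have := Sm_big c1 (c2 - c1). have -> : c1 + (c2 - c1) = c2 by mlia.
  nia.
have -> : maxn c1 c2 = c1 by mlia.
rewrite Sm_small //; mlia.
Qed.

Definition rowl (r lo n : nat) : seq cell := [seq (r, c) | c <- iota lo n].

Lemma mem_rowl r lo n (x : cell) :
  (x \in rowl r lo n) = (crow x == r) && (lo <= ccol x < lo + n).
Proof.
case: x => r' c; apply/mapP/andP => [[c' H [-> ->]] | [/eqP /= -> H]].
  by rewrite mem_iota in H.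
by exists c; rewrite ?mem_iota.
Qed.

Lemma lob_row b c1 c2 (x : cell) : lobster_cell b c1 c2 x ->
  [\/ crow x = 1 /\ b + 2 <= ccol x <= b + 1 + c2,
      crow x = 2 /\ 2 <= ccol x <= b + 1
    | crow x = 3 /\ b + 2 <= ccol x <= b + 1 + c1].
Proof.
case: x => r c /or3P [] /andP [/eqP -> H]; [apply: Or31 | apply: Or32 | apply: Or33]; by [].
Qed.

Lemma row_lob b c1 c2 (x : cell) :
  [\/ crow x = 1 /\ b + 2 <= ccol x <= b + 1 + c2,
      crow x = 2 /\ 2 <= ccol x <= b + 1
    | crow x = 3 /\ b + 2 <= ccol x <= b + 1 + c1] -> lobster_cell b c1 c2 x.
Proof.
case: x => r c /= [[-> H]|[-> H]|[-> H]]; rewrite /lobster_cell /= H ?orbT //.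
Qed.

Definition lob b c1 c2 := rowl 1 (b + 2) c2 ++ rowl 2 2 b ++ rowl 3 (b + 2) c1.

Lemma mem_lob b c1 c2 x : (x \in lob b c1 c2) = lobster_cell b c1 c2 x.
Proof.
apply/idP/idP.
  rewrite !mem_cat !mem_rowl => /orP [H|/orP [H|H]]; move/andP: H => [/eqP E H];
  apply: row_lob; [apply: Or31 | apply: Or32 | apply: Or33]; split => //; mlia.
case/lob_row => [[E H]|[E H]|[E H]]; rewrite !mem_cat !mem_rowl E /=.
all: rewrite ?orbF; apply/andP; split; mlia.
Qed.

Lemma cover b c1 c2 s x : is_SET b c1 c2 s -> lobster_cell b c1 c2 x -> x \in s.
Proof.
case=> Hsz Hu Ha _ _ Hx.
have Hsub : {subset s <= lob b c1 c2}.
  by move=> y Hy; rewrite mem_lob; exact: (allP Ha).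
have Hsize : size (lob b c1 c2) <= size s.
  by rewrite Hsz /lob !size_cat !size_map !size_iota /lobster_size; mlia.
have [_ E] := uniq_min_size Hu Hsub Hsize.
by rewrite E mem_lob.
Qed.

Definition cnt (r : nat) (p : seq cell) := count (fun z : cell => crow z == r) p.

Lemma cnt_bound r n lo (p : seq cell) : uniq p ->
  (forall z, z \in p -> crow z = r -> lo <= ccol z < lo + n) -> cnt r p <= n.
Proof.
move=> Hu H; rewrite /cnt -size_filter.
have -> : n = size (rowl r lo n) by rewrite size_map size_iota.
apply: uniq_leq_size; first exact: filter_uniq.
move=> z; rewrite mem_filter mem_rowl => /andP [/eqP E Hz].
by rewrite E eqxx /= H.
Qed.

Lemma cnt_ge (p : seq cell) r l : uniq l -> (forall z, z \in l -> z \in p /\ crow z = r) ->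
  size l <= cnt r p.
Proof.
move=> Hu H; rewrite /cnt -size_filter; apply: uniq_leq_size => // z /H [H1 H2].
by rewrite mem_filter H2 eqxx.
Qed.

Lemma lattice b c1 c2 s k : is_SET b c1 c2 s ->
  minn (cnt 3 (take k s)) c2 <= cnt 1 (take k s).
Proof.
move=> HS; have Hp := SET_pairwise HS.
have HS' := HS; case: HS' => Hsz Hu Ha _ _.
set p := take k s.
have Hup : uniq p by exact: take_uniq.
have Hap : forall z, z \in p -> lobster_cell b c1 c2 z.
  move=> z /mem_take; exact: (allP Ha).
have Hrel : allrel Rc p (drop k s).
  by move: Hp; rewrite -{1}(cat_take_drop k s) pairwise_cat => /andP [].
have Hq : forall z, z \in s -> z \notin p -> z \in drop k s.
  move=> z; rewrite -{1}(cat_take_drop k s) mem_cat => /orP [->//|//].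
set n3 := cnt 3 p.
have Hn3 : n3 <= c1.
  apply: (cnt_bound (lo := b + 2)) => // z /Hap /lob_row [[E H]|[E H]|[E H]] E';
  apply/andP; split; mlia.
have A : forall t, 1 <= t <= n3 -> (3, b + 1 + t) \in p.
  move=> t Ht; case: (boolP ((3, b + 1 + t) \in p)) => // Hn.
  have Hin : (3, b + 1 + t) \in drop k s.
    apply: Hq Hn; apply: (cover HS); apply: row_lob; apply: Or33 => /=; mlia.
  have : n3 <= t.-1.
    apply: (cnt_bound (lo := b + 2)) => // z Hz E.
    have := allrelP Hrel z _ Hz Hin; case/Rc_elim => /= H1 _.
    have := H1 E.
    have := Hap z Hz; case/lob_row => [[E' H]|[E' H]|[E' H]] H3; apply/andP; split; mlia.
  mlia.
set j := minn n3 c2.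
have B : forall t, 1 <= t <= j -> (1, b + 1 + t) \in p.
  move=> t Ht; case: (boolP ((1, b + 1 + t) \in p)) => // Hn.
  have Hin : (1, b + 1 + t) \in drop k s.
    apply: Hq Hn; apply: (cover HS); apply: row_lob; apply: Or31 => /=; mlia.
  have H3 := A t ltac:(mlia).
  have := allrelP Hrel _ _ H3 Hin; case/Rc_elim => _ /= H2.
  have := H2 erefl; mlia.
have -> : j = size (rowl 1 (b + 2) j) by rewrite size_map size_iota.
apply: cnt_ge.
  rewrite map_inj_uniq ?iota_uniq // => x y [] //.
move=> z; rewrite mem_rowl => /andP [/eqP E H]; split => //.
case: z E H => r c /= -> H.
have -> : c = b + 1 + (c - b - 1) by mlia.
apply: B; mlia.
Qed.

Lemma SET_Pw b c1 c2 s k : is_SET b c1 c2 s -> Pw b c1 c2 (take k (map crow s)).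
Proof.
move=> HS; have HS' := HS; case: HS' => Hsz Hu Ha _ _.
rewrite -map_take.
have cmE : forall r, cm r (map crow (take k s)) = cnt r (take k s).
  by move=> r; rewrite /cm count_map; apply: eq_count => z /=.
have Hup : uniq (take k s) by exact: take_uniq.
have Hap : forall z, z \in take k s -> lobster_cell b c1 c2 z.
  move=> z /mem_take; exact: (allP Ha).
split; rewrite ?cmE.
- apply: (cnt_bound (lo := b + 2)) => // z /Hap /lob_row [[E H]|[E H]|[E H]] E';
  apply/andP; split; mlia.
- apply: (cnt_bound (lo := 2)) => // z /Hap /lob_row [[E H]|[E H]|[E H]] E';
  apply/andP; split; mlia.
- apply: (cnt_bound (lo := b + 2)) => // z /Hap /lob_row [[E H]|[E H]|[E H]] E';
  apply/andP; split; mlia.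
- exact: (@lattice b c1 c2 s k HS).
- rewrite all_map; apply/allP => z /Hap /lob_row [[E H]|[E H]|[E H]]; by rewrite /= E.
Qed.

Lemma upper b c1 c2 s : is_SET b c1 c2 s ->
  inv (map crow s) <= (if c1 <= c2 then c2 * (b + c1) - 'C(c1.+1, 2) else b * c1 + 'C(c2, 2)).
Proof.
move=> HS; rewrite -R_eq.
have H := psi (fun k => SET_Pw k HS).
have [H1 H2 _ _ _] := SET_Pw (size (map crow s)) HS.
move: H1 H2; rewrite take_size => H1 H2.
have := Sm_mono c1 H1.
have : cm 2 (map crow s) * maxn c1 c2 <= b * maxn c1 c2 by exact: leq_mul.
mlia.
Qed.

Fixpoint zig (b n : nat) : seq cell :=
  if n is n'.+1 then zig b n' ++ [:: (1, b + 2 + n'); (3, b + 2 + n')] else [::].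
Fixpoint blk (r a n : nat) : seq cell :=
  if n is n'.+1 then blk r a n' ++ [:: (r, a + n')] else [::].
Fixpoint zw (n : nat) : seq nat :=
  if n is n'.+1 then zw n' ++ [:: 1; 3] else [::].

Lemma size_zig b n : size (zig b n) = n + n.
Proof. elim: n => //= n IH; rewrite size_cat IH /=; mlia. Qed.

Lemma size_blk r a n : size (blk r a n) = n.
Proof. elim: n => //= n IH; rewrite size_cat IH /=; mlia. Qed.

Lemma mem_zig b n x : x \in zig b n ->
  (crow x = 1 \/ crow x = 3) /\ b + 2 <= ccol x < b + 2 + n.
Proof.
elim: n => //= n IH; rewrite mem_cat => /orP [/IH [H1 H2]|]; first by split => //; mlia.
rewrite !inE => /orP [] /eqP -> /=; split; auto; mlia.
Qed.

Lemma mem_blk r a n x : x \in blk r a n -> crow x = r /\ a <= ccol x < a + n.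
Proof.
elim: n => //= n IH; rewrite mem_cat => /orP [/IH [H1 H2]|]; first by split => //; mlia.
rewrite !inE => /eqP -> /=; split; auto; mlia.
Qed.

Lemma pairwise_zig b n : pairwise Rc (zig b n).
Proof.
elim: n => //= n IH; rewrite pairwise_cat IH pairwise2 /=.
apply/andP; split.
  apply/allrelP => x y /mem_zig [H1 H2]; rewrite !inE => /orP [] /eqP ->;
  apply: Rc_intro => /= E; mlia.
apply: Rc_intro => /= E; mlia.
Qed.

Lemma pairwise_blk r a n : pairwise Rc (blk r a n).
Proof.
elim: n => //= n IH; rewrite pairwise_cat IH /= ?andbT.
apply/allrelP => x y /mem_blk [H1 H2]; rewrite !inE => /eqP ->;
apply: Rc_intro => /= E; mlia.
Qed.

Lemma map_zig b n : map crow (zig b n) = zw n.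
Proof. elim: n => //= n IH; by rewrite map_cat IH. Qed.

Lemma map_blk r a n : map crow (blk r a n) = nseq n r.
Proof.
elim: n => //= n IH; rewrite map_cat IH /=.
elim: n {IH} => //= n ->; by [].
Qed.

Lemma inv_nseq n r : inv (nseq n r) = 0.
Proof. elim: n => //= n ->; rewrite count_nseq ltnn; mlia. Qed.

Lemma cross_nseq n r v : cross (nseq n r) v = n * count (fun y => y < r) v.
Proof. elim: n => //= n ->; rewrite mulSn. by []. Qed.

Lemma cross_zw n v : cross (zw n) v = n * (count (fun y => y < 1) v + count (fun y => y < 3) v).
Proof. elim: n => //= n IH; rewrite cross_catl IH /= mulSn addn0; mlia. Qed.

Lemma inv_zw n : inv (zw n) = 'C(n, 2).
Proof.
elim: n => //= n IH; rewrite inv_cat IH cross_zw /= binS bin1; mlia.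
Qed.

Definition s0 b c1 c2 : seq cell :=
  if c1 <= c2 then zig b c1 ++ blk 2 2 b ++ blk 1 (b + 2 + c1) (c2 - c1)
  else zig b c2 ++ blk 3 (b + 2 + c2) (c1 - c2) ++ blk 2 2 b.

Lemma s0_SET b c1 c2 : is_SET b c1 c2 (s0 b c1 c2).
Proof.
rewrite /s0; case: ifP => Hc; apply: pairwise_SET.
- rewrite !size_cat size_zig !size_blk /lobster_size; mlia.
- rewrite !all_cat; apply/and3P; split; apply/allP => x.
  + move/mem_zig => [H1 H2]; apply: row_lob; case: H1 => E; [apply: Or31 | apply: Or33]; mlia.
  + move/mem_blk => [H1 H2]; apply: row_lob; apply: Or32; mlia.
  + move/mem_blk => [H1 H2]; apply: row_lob; apply: Or31; mlia.
- match goal with |- is_true (pairwise Rc (?A ++ ?B ++ ?C)) =>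
    have A1 : allrel Rc A B; [|have A2 : allrel Rc A C; [|have A3 : allrel Rc B C]] end.
  + apply/allrelP => x y /mem_zig [H1 H2] /mem_blk [H3 H4]; apply: Rc_intro => E; mlia.
  + apply/allrelP => x y /mem_zig [H1 H2] /mem_blk [H3 H4]; apply: Rc_intro => E; mlia.
  + apply/allrelP => x y /mem_blk [H1 H2] /mem_blk [H3 H4]; apply: Rc_intro => E; mlia.
  + by rewrite !pairwise_cat allrel_catr A1 A2 A3 pairwise_zig !pairwise_blk.
- rewrite !size_cat size_zig !size_blk /lobster_size; mlia.
- rewrite !all_cat; apply/and3P; split; apply/allP => x.
  + move/mem_zig => [H1 H2]; apply: row_lob; case: H1 => E; [apply: Or31 | apply: Or33]; mlia.
  + move/mem_blk => [H1 H2]; apply: row_lob; apply: Or33; mlia.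
  + move/mem_blk => [H1 H2]; apply: row_lob; apply: Or32; mlia.
- match goal with |- is_true (pairwise Rc (?A ++ ?B ++ ?C)) =>
    have A1 : allrel Rc A B; [|have A2 : allrel Rc A C; [|have A3 : allrel Rc B C]] end.
  + apply/allrelP => x y /mem_zig [H1 H2] /mem_blk [H3 H4]; apply: Rc_intro => E; mlia.
  + apply/allrelP => x y /mem_zig [H1 H2] /mem_blk [H3 H4]; apply: Rc_intro => E; mlia.
  + apply/allrelP => x y /mem_blk [H1 H2] /mem_blk [H3 H4]; apply: Rc_intro => E; mlia.
  + by rewrite !pairwise_cat allrel_catr A1 A2 A3 pairwise_zig !pairwise_blk.
Qed.

Lemma s0_inv b c1 c2 : inv (map crow (s0 b c1 c2)) =
  (if c1 <= c2 then c2 * (b + c1) - 'C(c1.+1, 2) else b * c1 + 'C(c2, 2)).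
Proof.
rewrite /s0; case: ifP => Hc; rewrite !map_cat map_zig !map_blk !inv_cat inv_zw
  !inv_nseq cross_zw cross_nseq !count_cat !count_nseq /=.
- have := bin2_id c1. rewrite binS bin1.
  have E : c2 = c1 + (c2 - c1) by mlia.
  move: (c2 - c1) E => d E; subst c2. move=> H; nia.
- nia.
Qed.

Definition dpred (s : seq cell) (i : nat) : bool :=
  crow (nth (0,0) s i.+1) < crow (nth (0,0) s i).
Definition desc (s : seq cell) : nat := find (dpred s) (iota 0 (size s).-1).
Definition step (s : seq cell) : seq cell := swap_entries s (desc s).+1.

Lemma step_ok b c1 c2 s : is_SET b c1 c2 s -> 0 < inv (map crow s) ->
  [/\ is_SET b c1 c2 (step s), inv (map crow (step s)) + 1 = inv (map crow s)
    & pi_step s (step s)].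
Proof.
move=> HS Hinv.
have [i [Hi Hd]] := descent Hinv.
rewrite size_map in Hi.
rewrite (nth_map (0,0)) in Hd; last mlia.
rewrite (nth_map (0,0)) in Hd; last mlia.
have Hh : has (dpred s) (iota 0 (size s).-1).
  apply/hasP; exists i => //; rewrite mem_iota; mlia.
have Hf := Hh; rewrite has_find size_iota in Hf.
have Hn := nth_find 0 Hh; rewrite nth_iota // add0n in Hn.
rewrite /step -/(desc s) in Hn Hf *.
have Hk : (desc s).+1 < size s by mlia.
split.
- exact: swap_SET.
- exact: inv_swap.
- exists (desc s).+1; split => //; split; first mlia.
  rewrite /pi_op /cellof /=.
  move: Hn; rewrite /dpred => Hn.
  by rewrite ltnNge (ltnW Hn) /= Hn.
Qed.

Definition xs b c1 c2 (k : nat) : seq cell := iter k step (s0 b c1 c2).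

Lemma chain_ok b c1 c2 k :
  k <= (if c1 <= c2 then c2 * (b + c1) - 'C(c1.+1, 2) else b * c1 + 'C(c2, 2)) ->
  is_SET b c1 c2 (xs b c1 c2 k) /\
  inv (map crow (xs b c1 c2 k)) + k =
  (if c1 <= c2 then c2 * (b + c1) - 'C(c1.+1, 2) else b * c1 + 'C(c2, 2)).
Proof.
elim: k => [|k IH] Hk.
  by rewrite /xs /= s0_inv addn0; split => //; exact: s0_SET.
have [H1 H2] := IH (ltnW Hk).
have Hpos : 0 < inv (map crow (xs b c1 c2 k)) by mlia.
have [S1 S2 _] := step_ok H1 Hpos.
rewrite /xs /= -/(xs b c1 c2 k); split => //; mlia.
Qed.

Unset Implicit Arguments.
Theorem corollary5p10 (b c1 c2 : nat) :
  0 < b -> 0 < c1 -> 0 < c2 ->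
  longest_chain_length b c1 c2
    (if c1 <= c2 then c2 * (b + c1) - 'C(c1.+1, 2)
     else b * c1 + 'C(c2, 2)).
Proof.
move=> _ _ _; split.
  exists (xs b c1 c2); split.
    by move=> k Hk; case: (chain_ok Hk).
  move=> k Hk.
  have [H1 H2] := chain_ok (ltnW Hk).
  have [H1' H2'] := chain_ok Hk.
  have Hpos : 0 < inv (map crow (xs b c1 c2 k)) by mlia.
  have [S1 S2 S3] := step_ok H1 Hpos.
  have E : xs b c1 c2 k.+1 = step (xs b c1 c2 k) by [].
  split; rewrite E; first exact: rt_step.
  move=> Heq; move: S2; rewrite -Heq; mlia.
move=> r x [H1 H2].
have K : forall k, k <= r -> inv (map crow (x k)) + k <= inv (map crow (x 0)).
  elim=> [|k IH] Hk; first by rewrite addn0.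
  have := SET_lt_inv (H2 k Hk); have := IH (ltnW Hk); mlia.
have := K r (leqnn r); have := upper (H1 0 (leq0n r)); mlia.
Qed.
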